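(* Let $A$ be an infinite set, fix $z\in A$, $A'=A\setminus\{z\}$, and $p\in[1,\infty)$. Let $\alpha^n=a_1^na_2^n\ldots\in N(A)$ for $n\in\mathbb{N}^*$, $x_n=p_p(\alpha^n)$, and let $\alpha=a_1a_2\ldots\in N(A)$, $x=p_p(\alpha)$. (i) If the sequence $(a_n)_{n\in\mathbb{N}^*}$ is not eventually constant (for every $q\in\mathbb{N}^*$ it is not constant from index $q$ on), then $\lim_{n\to\infty}\|x_n-x\|_p=0$ if and only if $\lim_{n\to\infty}\alpha^n=\alpha$ in $N(A)$. (ii) If there are $n_0\in\mathbb{N}^*$, $n_0\ge2$, and $a,b\in A$, $a\neq b$, with $\alpha=a_1\ldots a_{n_0-1}abbb\ldots$ (the $n_0$-th letter is $a$ and all later letters are $b$), then $\lim_{n\to\infty}\|x_n-x\|_p=0$ if and only if for every $m\in\mathbb{N}^*$ with $m>n_0+1$ there exists $l_m\in\mathbb{N}^*$ such that for every $l\ge l_m$ one of the following holds: ($\alpha$) $a_i^l=a_i$ for $i=1,\ldots,n_0-1$, $a_{n_0}^l=a$, and $a_{n_0+1}^l=\cdots=a_m^l=b$; ($\beta$) $a_i^l=a_i$ for $i=1,\ldots,n_0-1$, $a_{n_0}^l=b$, and $a_{n_0+1}^l=\cdots=a_m^l=a$.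
   Context: $l^p(A)$ is the set of families $x=(x_c)_{c\in A'}$ of real numbers with $x_c=0$ for all but countably many $c$ and $\sum_c|x_c|^p<\infty$, with norm $\|x\|_p=(\sum_c|x_c|^p)^{1/p}$. $N(A)$ is the set of all sequences $\alpha=a_1a_2a_3\ldots$ with $a_k\in A$, with metric $d(v,v')=1/k$ where $k$ is the first index at which $v,v'$ differ, and $d(v,v)=0$. The map $p_p:N(A)\to l^p(A)$ is $p_p(\alpha)=(\alpha_c)_{c\in A'}$ where, for $\alpha=a_1a_2\ldots$, $\alpha_c=\sum_{k:\,a_k=c}2^{-k}$ (and $\alpha_c=0$ if no $a_k$ equals $c$). *)

(* Defs.v *)
From HB Require Import structures.
From mathcomp Require Import all_boot all_order all_algebra.
From mathcomp Require Import all_classical all_reals all_analysis.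
Set Implicit Arguments. Unset Strict Implicit. Unset Printing Implicit Defensive.
Import Order.TTheory GRing.Theory Num.Theory.
Import numFieldNormedType.Exports.
Local Open Scope classical_set_scope.
Local Open Scope ring_scope.

(* Elements of N(A) are sequences a_1 a_2 ... ; we represent them as
   functions nat -> A, using only the indices k >= 1 (the value at 0 is
   irrelevant and never used). *)

Definition coord {R : realType} {A : Type} (a : nat -> A) (c : A) : R :=
  limn (fun n : nat => \sum_(1 <= k < n) (if `[< a k = c >] then (2%:R ^- k : R) else 0)).

(* p_p(alpha) = (alpha_c)_{c in A'}; we record it as a function on A,
   the coordinate z being discarded by the l^p norm below. *)
Definition pp {R : realType} {A : Type} (a : nat -> A) : A -> R :=
  fun c => coord a c.

Definition lp_dist {R : realType} {A : choiceType} (z : A) (p : R)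
  (x y : A -> R) : \bar R :=
  poweR (esum [set c | c <> z] (fun c => ((`|x c - y c|) `^ p)%:E)) p^-1.

Definition first_diff {A : Type} (u v : nat -> A)
  (h : exists k, `[< (1 <= k)%N /\ u k <> v k >]) : nat :=
  ex_minn h.

Definition dN {R : realType} {A : Type} (u v : nat -> A) : R :=
  match pselect (exists k, `[< (1 <= k)%N /\ u k <> v k >]) with
  | left h => ((first_diff h)%:R)^-1
  | right _ => 0
  end.

Definition cvg_NA {R : realType} {A : Type} (an : nat -> nat -> A) (a : nat -> A) :=
  (fun n : nat => (dN (an n) a : R)) @ \oo --> (0 : R).

Definition cvg_lp {R : realType} {A : choiceType} (z : A) (p : R)
  (an : nat -> nat -> A) (a : nat -> A) :=
  ((fun n => lp_dist z p (pp (an n)) (pp a)) @ \oo --> 0%E).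

(* Main.v *)
Require Import Defs.
From HB Require Import structures.
From mathcomp Require Import all_boot all_order all_algebra.
From mathcomp Require Import all_classical all_reals all_analysis.
From mathcomp Require Import lra zify.
From mathcomp Require finmap.
Import Order.TTheory GRing.Theory Num.Theory.
Import numFieldNormedType.Exports.
Local Open Scope classical_set_scope.
Local Open Scope ring_scope.

Set Implicit Arguments. Unset Strict Implicit.
Section S.
Variable R : realType.

Definition w (k : nat) : R := 2%:R ^- k.
Definition fw {A : Type} (u : nat -> A) (c : A) (i : nat) : R :=
  if `[< u i = c >] then w i else 0.
Definition Fs {A : Type} (u : nat -> A) (c : A) (n : nat) : R :=
  \sum_(1 <= i < n) fw u c i.

Lemma w_gt0 k : 0 < w k.
Proof. by rewrite /w invr_gt0 exprn_gt0. Qed.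
Lemma w_ge0 k : 0 <= w k.
Proof. exact/ltW/w_gt0. Qed.
Lemma wS k : w k = 2 * w k.+1.
Proof. rewrite /w exprS invfM mulrA divff //; first by rewrite mul1r. Qed.
Lemma w_le k j : (k <= j)%N -> w j <= w k.
Proof.
elim: j => [|j IH]; first by rewrite leqn0 => /eqP->.
rewrite leq_eqVlt => /orP[/eqP->//|/IH].
apply: le_trans. rewrite [w j]wS. have := w_gt0 j.+1. lra.
Qed.

Lemma geo k n : (k <= n)%N -> \sum_(k <= i < n) w i = 2 * w k - 2 * w n.
Proof.
elim: n => [|n IH]; first by rewrite leqn0 => /eqP->; rewrite big_geq // subrr.
rewrite leq_eqVlt => /orP[/eqP->|]; first by rewrite big_geq // subrr.
rewrite ltnS => kn; rewrite big_nat_recr //= (IH kn).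
rewrite [w n]wS. lra.
Qed.

Lemma fw_ge0 A (u : nat -> A) c i : 0 <= fw u c i.
Proof. rewrite /fw; case: ifP => _ //; exact: w_ge0. Qed.
Lemma fw_le A (u : nat -> A) c i : fw u c i <= w i.
Proof. rewrite /fw; case: ifP => _ //; exact: w_ge0. Qed.
Lemma fwT A (u : nat -> A) c i : u i = c -> fw u c i = w i.
Proof. by move=> h; rewrite /fw asboolT. Qed.
Lemma fwF A (u : nat -> A) c i : u i <> c -> fw u c i = 0.
Proof. by move=> h; rewrite /fw asboolF. Qed.
Lemma fw2 A (u : nat -> A) c e i : c <> e -> fw u c i + fw u e i <= w i.
Proof.
move=> ce; case: (pselect (u i = c)) => h.
  rewrite fwT // fwF; first by rewrite addr0.
  by move=> h'; apply: ce; rewrite -h h'.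
by rewrite (fwF h) add0r fw_le.
Qed.

Lemma Fs_nd A (u : nat -> A) c : nondecreasing_seq (Fs u c).
Proof.
apply/nondecreasing_seqP => n; rewrite /Fs.
case: n => [|n]; first by rewrite !big_geq.
rewrite [X in _ <= X]big_nat_recr //= lerDl; exact: fw_ge0.
Qed.

Lemma Fs_split A (u : nat -> A) c n m : (1 <= n)%N -> (n <= m)%N ->
  Fs u c m = Fs u c n + \sum_(n <= i < m) fw u c i.
Proof. by move=> n1 nm; rewrite /Fs (@big_cat_nat _ _ _ n). Qed.

Lemma Fs_tail A (u : nat -> A) c N n : (1 <= N)%N ->
  Fs u c n <= Fs u c N + 2 * w N.
Proof.
move=> N1; have [nN|Nn] := leqP n N.
  apply: le_trans (Fs_nd u c nN) _; rewrite lerDl; have := w_ge0 N; lra.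
rewrite (Fs_split u c N1 (ltnW Nn)) lerD2l.
apply: le_trans (_ : \sum_(N <= i < n) w i <= _).
  by apply: ler_sum => i _; exact: fw_le.
rewrite geo ?(ltnW Nn) //; have := w_ge0 n; lra.
Qed.

Lemma Fs_ub A (u : nat -> A) c n : Fs u c n <= 1.
Proof.
apply: le_trans (Fs_tail u c n (leqnn 1)) _.
by rewrite /Fs big_geq // add0r /w expr1 mulfV.
Qed.

Lemma coord_sup A (u : nat -> A) c : Defs.coord (R:=R) u c = sup (range (Fs u c)).
Proof.
have -> : Defs.coord (R:=R) u c = limn (Fs u c) by [].
apply: cvg_lim => //; apply: nondecreasing_cvgn; first exact: Fs_nd.
by exists 1 => _ [n _ <-]; exact: Fs_ub.
Qed.

Lemma coord_bounds A (u : nat -> A) c N :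
  Fs u c N <= Defs.coord (R:=R) u c <= Fs u c N + 2 * w N.
Proof.
have hub : has_sup (range (Fs u c)).
  by split; [exists (Fs u c 0), 0%N|exists 1 => _ [n _ <-]; exact: Fs_ub].
rewrite coord_sup; apply/andP; split.
  by apply: sup_upper_bound => //; exists N.
apply: ge_sup; first by exists (Fs u c 0), 0%N.
move=> _ [n _ <-]; case: N => [|N]; last exact: Fs_tail.
apply: le_trans (Fs_ub u c n) _.
by rewrite /Fs big_geq // add0r /w expr0 invr1; lra.
Qed.

Lemma coord_ge0 A (u : nat -> A) c : 0 <= Defs.coord (R:=R) u c.
Proof.
have /andP[+ _] := coord_bounds u c 0; apply: le_trans.
by rewrite /Fs big_geq.
Qed.

Lemma coord_le1 A (u : nat -> A) c : Defs.coord (R:=R) u c <= 1.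
Proof.
have /andP[_ +] := coord_bounds u c 1; move/le_trans; apply.
by rewrite /Fs big_geq // add0r /w expr1 mulfV.
Qed.

Lemma sum1 (g : nat -> R) k i N : (k <= i < N)%N -> (forall i, 0 <= g i) ->
  g i <= \sum_(k <= l < N) g l.
Proof.
move=> /andP[ki iN] g0.
rewrite (@big_cat_nat _ _ _ i) ?(ltnW iN) //= [X in _ + X]big_ltn //=.
by rewrite addrCA lerDl addr_ge0 //; exact: sumr_ge0.
Qed.

Lemma sum2 (g : nat -> R) k i1 i2 N : (k <= i1)%N -> (i1 < i2)%N -> (i2 < N)%N ->
  (forall i, 0 <= g i) ->
  g i1 + g i2 <= \sum_(k <= l < N) g l.
Proof.
move=> ki1 i12 i2N g0.
rewrite (@big_cat_nat _ _ _ i2) ?(ltnW i2N) //=; last first.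
  by apply: leq_trans ki1 (ltnW i12).
apply: lerD; first by apply: sum1 => //; rewrite ki1 i12.
by apply: sum1 => //; rewrite leqnn i2N.
Qed.

Lemma gap1 (g h : nat -> R) k i N : (k <= i < N)%N -> (forall i, g i <= h i) ->
  \sum_(k <= l < N) g l + (h i - g i) <= \sum_(k <= l < N) h l.
Proof.
move=> hi gh; rewrite -lerBrDl -sumrB; apply: sum1 => // l.
by rewrite subr_ge0.
Qed.

Lemma gap2 (g h : nat -> R) k i1 i2 N : (k <= i1)%N -> (i1 < i2)%N -> (i2 < N)%N ->
  (forall i, g i <= h i) ->
  \sum_(k <= l < N) g l + ((h i1 - g i1) + (h i2 - g i2)) <= \sum_(k <= l < N) h l.
Proof.
move=> ki1 i12 i2N gh; rewrite -lerBrDl -sumrB.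
by apply: (@sum2 (fun l => h l - g l)) => // l; rewrite subr_ge0.
Qed.

Definition Gs {A : Type} (u : nat -> A) (c : A) k N := \sum_(k <= i < N) fw u c i.

Lemma Dbounds A (u v : nat -> A) c k N : (1 <= k)%N -> (k <= N)%N ->
  (forall i, (1 <= i < k)%N -> u i = v i) ->
  Gs u c k N - Gs v c k N - 2 * w N <= Defs.coord (R:=R) u c - Defs.coord (R:=R) v c
  <= Gs u c k N - Gs v c k N + 2 * w N.
Proof.
move=> k1 kN huv.
have /andP[u1 u2] := coord_bounds u c N.
have /andP[v1 v2] := coord_bounds v c N.
move: u1 u2 v1 v2; rewrite (Fs_split u c k1 kN) (Fs_split v c k1 kN).
have -> : Fs u c k = Fs v c k.
  by apply: eq_big_nat => i hi; rewrite /fw (huv i hi).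
rewrite /Gs => u1 u2 v1 v2; apply/andP; split; lra.
Qed.

Lemma step A (z : A) (u v : nat -> A) k j :
  (1 <= k)%N -> (k < j)%N -> (forall i, (1 <= i < k)%N -> u i = v i) -> u k <> v k ->
  (u k <> z -> v j <> u k) -> (u k = z -> v j <> z) ->
  exists c, c <> z /\ w j.+2 <= `|Defs.coord (R:=R) u c - Defs.coord (R:=R) v c|.
Proof.
move=> k1 kj huv ukv H1 H2.
have kN : (k <= j.+2)%N by apply: leq_trans (ltnW kj) _; rewrite leqW.
have jN : (j < j.+2)%N by rewrite leqW.
have w1 := wS j.+1; have w0 := wS j.
have wkj : w j <= w k by apply: w_le; exact: ltnW.
have wjj : w j.+2 <= w j by apply: w_le; rewrite leqW.
have w2p := w_gt0 j.+2.
have hgeo := geo kN.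
have hkk : (k <= k < j.+2)%N by rewrite leqnn /=; apply: ltn_trans kj jN.
case: (pselect (u k = z)) => hz.
- have vkz : v k <> z by move=> h; apply: ukv; rewrite hz h.
  have vjz := H2 hz.
  have ukc : u k <> v k by [].
  case: (pselect (v j = v k)) => ec.
  + exists (v k); split => //.
    have /andP[_ D2] := Dbounds (v k) k1 kN huv.
    have g1 := @gap1 (fw u (v k)) w k k j.+2 hkk (fw_le u (v k)).
    rewrite (fwF ukc) in g1.
    have s2 := @sum2 (fw v (v k)) k k j j.+2 (leqnn k) kj jN (fw_ge0 v (v k)).
    rewrite (fwT (erefl (v k))) (fwT ec) in s2.
    rewrite ler_normr; apply/orP; right.
    move: D2 g1 s2 hgeo; rewrite /Gs; lra.
  + have vjz' : v j <> z by [].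
    have ukj : u k <> v j by move=> h; apply: vjz; rewrite -h.
    have /andP[_ Dc] := Dbounds (v k) k1 kN huv.
    have /andP[_ De] := Dbounds (v j) k1 kN huv.
    have g1 := @gap1 (fun l => fw u (v k) l + fw u (v j) l) w k k j.+2 hkk
      (fun l => fw2 u l (nesym ec)).
    rewrite /= (fwF ukc) (fwF ukj) addr0 in g1.
    rewrite big_split /= in g1.
    have s2 := @sum2 (fun l => fw v (v k) l + fw v (v j) l) k k j j.+2 (leqnn k) kj jN
      (fun l => addr_ge0 (fw_ge0 v (v k) l) (fw_ge0 v (v j) l)).
    rewrite (fwT (erefl (v k))) (fwT (erefl (v j))) big_split /= in s2.
    have f1 := fw_ge0 v (v j) k; have f2 := fw_ge0 v (v k) j.
    case: (lerP (Defs.coord (R:=R) u (v k) - Defs.coord (R:=R) v (v k)) (- w j.+2)) => hc.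
    * exists (v k); split => //; rewrite ler_normr; apply/orP; right; lra.
    * exists (v j); split => //; rewrite ler_normr; apply/orP; right.
      move: Dc De g1 s2 hgeo; rewrite /Gs; lra.
- exists (u k); split => //.
  have vj := H1 hz.
  have vk : v k <> u k by apply: nesym.
  have /andP[D1 _] := Dbounds (u k) k1 kN huv.
  have s1 := @sum1 (fw u (u k)) k k j.+2 hkk (fw_ge0 u (u k)).
  rewrite (fwT (erefl (u k))) in s1.
  have g2 := @gap2 (fw v (u k)) w k k j j.+2 (leqnn k) kj jN (fw_le v (u k)).
  rewrite (fwF vk) (fwF vj) in g2.
  rewrite ler_normr; apply/orP; left.
  move: D1 s1 g2 hgeo; rewrite /Gs; lra.
Qed.

Local Open Scope ereal_scope.

Lemma lp_ge (A : choiceType) (z : A) (p : R) (x y : A -> R) c : (0 < p)%R -> c <> z ->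
  (`|x c - y c|)%:E <= lp_dist z p x y.
Proof.
move=> p0 cz; rewrite /lp_dist.
set D := `|x c - y c|%R.
have h1 : ((D `^ p)%:E) <= esum [set c | c <> z] (fun c => ((`|x c - y c|) `^ p)%:E).
  apply: esum_ge; exists [set c]; first by rewrite /fsets /=; split; [exact: finite_set1|move=> t ->].
  by rewrite fsbig_set1.
have -> : D%:E = poweR ((D `^ p)%:E) p^-1.
  by rewrite poweR_EFin -powRrM mulfV ?gt_eqF // powRr1 // /D normr_ge0.
apply: (gt0_ler_poweR _ _ _ h1).
- by rewrite invr_ge0 ltW.
- by rewrite in_itv /= lee_fin powR_ge0 leey.
- by rewrite in_itv /= leey andbT; apply: esum_ge0 => t _; rewrite lee_fin powR_ge0.
Qed.

Lemma lp_le (A : choiceType) (z : A) (p : R) (x y : A -> R) (B : R) : (1 <= p)%R ->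
  (forall c, (`|x c - y c| <= 1)%R) ->
  (forall s : seq A, uniq s -> (\sum_(c <- s) `|x c - y c| <= B)%R) ->
  lp_dist z p x y <= ((B `^ p^-1)%R)%:E.
Proof.
move=> p1 D1 hs; rewrite /lp_dist.
have p0 : (0 < p)%R by apply: lt_le_trans p1; rewrite ltr01.
have B0 : (0 <= B)%R by have := hs [::] isT; rewrite big_nil.
have h1 : esum [set c | c <> z] (fun c => ((`|x c - y c|) `^ p)%:E) <= B%:E.
  apply: ge_ereal_sup => _ [F [finF FS] <-].
  rewrite fsbig_finite // sumEFin lee_fin.
  apply: le_trans (hs _ (finmap.fset_uniq _)).
  apply: ler_sum => c _.
  have := D1 c; have : (0 <= `|x c - y c|)%R by [].
  rewrite le_eqVlt => /orP[/eqP<-|h0] h1.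
    by rewrite powR0 // gt_eqF.
  by apply: ge1r_powR => //; rewrite h0.
rewrite -poweR_EFin; apply: (gt0_ler_poweR _ _ _ h1).
- by rewrite invr_ge0 ltW.
- by rewrite in_itv /= leey andbT; apply: esum_ge0 => t _; rewrite lee_fin powR_ge0.
- by rewrite in_itv /= lee_fin B0 leey.
Qed.

Local Close Scope ereal_scope.

Lemma wD a b : w (a + b) = w a * w b.
Proof. by rewrite /w exprD invfM. Qed.

Lemma nw_le1 n : n%:R * w n <= 1.
Proof.
have h : (n < 2 ^ n)%N by apply: ltn_expl.
rewrite /w ler_pdivrMr ?exprn_gt0 // mul1r.
by rewrite -natrX ler_nat ltnW.
Qed.

Lemma sum_fw_s (A : eqType) (u : nat -> A) i (s : seq A) : uniq s ->
  \sum_(c <- s) fw u c i = if u i \in s then w i else 0.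
Proof.
elim: s => [|x s IH]; first by rewrite big_nil.
rewrite /= => /andP[xs us]; rewrite big_cons IH // in_cons.
case: (eqVneq (u i) x) => [ux|ux] /=.
  by rewrite (fwT ux) ux (negPf xs) addr0.
by rewrite (fwF (elimN eqP ux)) add0r.
Qed.

Lemma sum_const_s (A : Type) (s : seq A) (K : R) : \sum_(c <- s) K = K *+ size s.
Proof. by elim: s => [|x s IH]; rewrite ?big_nil ?big_cons ?IH ?mulrS. Qed.

Lemma agree_bound (A : choiceType) (u v : nat -> A) m :
  (forall i, (1 <= i <= m)%N -> u i = v i) -> forall s : seq A, uniq s ->
  \sum_(c <- s) `|Defs.coord (R:=R) u c - Defs.coord (R:=R) v c| <= 3 * w m.
Proof.
move=> huv s us.
set n := size s; set N := (m + n + 1).+1.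
have kN : (m.+1 <= N)%N by rewrite /N ltnS -addnA leq_addr.
have huv' : forall i, (1 <= i < m.+1)%N -> u i = v i by move=> i; rewrite ltnS; exact: huv.
have hc : forall c, `|Defs.coord (R:=R) u c - Defs.coord (R:=R) v c| <=
    Gs u c m.+1 N + Gs v c m.+1 N + 2 * w N.
  move=> c; have /andP[D1 D2] := Dbounds c (ltn0Sn m) kN huv'.
  have g1 : 0 <= Gs u c m.+1 N by apply: sumr_ge0 => i _; exact: fw_ge0.
  have g2 : 0 <= Gs v c m.+1 N by apply: sumr_ge0 => i _; exact: fw_ge0.
  rewrite ler_norml; apply/andP; split; lra.
apply: le_trans (ler_sum _ (fun c _ => hc c)) _.
rewrite big_split big_split /= sum_const_s -/n.
have hG : forall u' : nat -> A, \sum_(c <- s) Gs u' c m.+1 N <= w m.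
  move=> u'; rewrite /Gs exchange_big /=.
  apply: le_trans (_ : \sum_(m.+1 <= i < N) w i <= _).
    apply: ler_sum => i _; rewrite sum_fw_s //; case: ifP => _ //; exact: w_ge0.
  by rewrite geo // -wS; have := w_ge0 N; lra.
have h1 := hG u; have h2 := hG v.
have h3 : (2 * w N) *+ n <= w m.
  rewrite -wS /N -mulr_natl addn1 -addSn wD mulrCA.
  have := nw_le1 n; have := w_ge0 m; have := w_ge0 n.+1; have := w_le (leqnSn n).
  move=> a b c d; apply: le_trans (ler_wpM2l (w_ge0 _) d) _.
  by rewrite mulr1; apply: w_le.
lra.
Qed.

Lemma arch (e : R) : 0 < e -> exists m : nat, (m.+1%:R : R)^-1 < e.
Proof.
move=> e0; have e1 : 0 <= e^-1 by rewrite invr_ge0 ltW.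
have h := archi_boundP e1.
exists (Num.bound e^-1).
rewrite -ltf_pV2 ?posrE ?invr_gt0 ?ltr0Sn // invrK.
apply: lt_le_trans h _; rewrite ler_nat; exact: leqnSn.
Qed.

Lemma w_le_inv m : w m <= (m.+1%:R)^-1.
Proof.
rewrite /w lef_pV2 ?posrE ?exprn_gt0 ?ltr0Sn //.
by rewrite -natrX ler_nat; apply: ltn_expl.
Qed.

Lemma w_small (e : R) : 0 < e -> exists M, forall m, (M <= m)%N -> w m < e.
Proof.
move=> /arch [M hM]; exists M => m hm.
apply: le_lt_trans hM; apply: le_trans (w_le_inv M); exact: w_le.
Qed.

Lemma dN_le (A : Type) (u v : nat -> A) m :
  (forall i, (1 <= i <= m)%N -> u i = v i) -> dN (R:=R) u v <= (m.+1%:R)^-1.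
Proof.
move=> huv; rewrite /dN; case: pselect => [h|h]; last by rewrite invr_ge0.
rewrite /Defs.first_diff; case: (ex_minnP h) => k /asboolP [k1 hk] _.
rewrite lef_pV2 ?posrE ?ltr0Sn //; last by rewrite ltr0n.
rewrite ler_nat ltnNge; apply/negP => km; apply: hk; apply: huv.
by rewrite k1.
Qed.

Lemma dN_ge0 (A : Type) (u v : nat -> A) : 0 <= dN (R:=R) u v.
Proof. by rewrite /dN; case: pselect => h //; rewrite invr_ge0. Qed.

Lemma dN_small (A : Type) (u v : nat -> A) m :
  dN (R:=R) u v < (m.+1%:R)^-1 -> forall i, (1 <= i <= m.+1)%N -> u i = v i.
Proof.
move=> hd i /andP[i1 im]; apply: contrapT => huv; move: hd; rewrite /dN.
case: pselect => [h|h]; last first.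
  by exfalso; apply: h; exists i; apply/asboolP.
rewrite /Defs.first_diff; case: (ex_minnP h) => k /asboolP [k1 hk] hmin.
have ki : (k <= i)%N by apply: hmin; apply/asboolP.
apply/negP; rewrite -leNgt lef_pV2 ?posrE ?ltr0Sn ?ltr0n // ler_nat.
exact: leq_trans ki im.
Qed.

Lemma NA_iff (A : Type) (an : nat -> nat -> A) a : cvg_NA (R:=R) an a <->
  forall m, exists L, forall l, (L <= l)%N -> forall i, (1 <= i <= m)%N -> an l i = a i.
Proof.
rewrite /cvg_NA; split.
  move/cvgrPdist_lt => h m.
  have := h (m.+1%:R^-1); rewrite invr_gt0 ltr0Sn => /(_ isT) [L _ HL].
  exists L => l hl i /andP[i1 im]; apply: (@dN_small _ _ _ m); last first.
    by rewrite i1 (leq_trans im (leqnSn _)).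
  by have := HL l hl; rewrite /= sub0r normrN ger0_norm ?dN_ge0.
move=> h; apply/cvgrPdist_lt => e e0.
have [m hm] := arch e0; have [L HL] := h m.
near=> l; have hl : (L <= l)%N by near: l; exact: nbhs_infty_ge.
rewrite sub0r normrN ger0_norm ?dN_ge0 //.
by apply: le_lt_trans hm; apply: dN_le; apply: HL.
Unshelve. all: by end_near.
Qed.

Lemma lp_agree (A : choiceType) (z : A) (p : R) (u v : nat -> A) m : 1 <= p ->
  (forall i, (1 <= i <= m)%N -> u i = v i) ->
  (lp_dist z p (pp (R:=R) u) (pp (R:=R) v) <= (((3 * w m) `^ p^-1))%:E)%E.
Proof.
move=> p1 huv; apply: lp_le => //.
  move=> c; rewrite /pp ler_norml; have := coord_ge0 u c; have := coord_le1 u c.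
  have := coord_ge0 v c; have := coord_le1 v c; move=> *; apply/andP; split; lra.
by move=> s us; apply: agree_bound.
Qed.

Lemma LP_lower (A : choiceType) (z : A) (p : R) an a : 0 < p -> cvg_lp z p an a ->
  forall d, 0 < d -> exists L, forall l, (L <= l)%N -> forall c, c <> z ->
  `|Defs.coord (R:=R) (an l) c - Defs.coord (R:=R) a c| < d.
Proof.
move=> p0 /fine_cvgP [[L1 _ H1] /cvgrPdist_lt hc] d d0.
have [L2 _ H2] := hc d d0.
exists (maxn L1 L2) => l hl c cz.
have hl1 : (L1 <= l)%N by apply: leq_trans hl; exact: leq_maxl.
have hl2 : (L2 <= l)%N by apply: leq_trans hl; exact: leq_maxr.
have f1 := H1 l hl1; have f2 := H2 l hl2.
have := lp_ge (pp (R:=R) (an l)) (pp (R:=R) a) p0 cz.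
rewrite -(fineK f1) lee_fin => h.
apply: le_lt_trans h _; apply: le_lt_trans f2.
by rewrite sub0r normrN ler_norm.
Qed.

Lemma LP_upper (A : choiceType) (z : A) (p : R) an a : 1 <= p ->
  (forall m, exists L, forall l, (L <= l)%N -> exists v, pp (R:=R) v = pp (R:=R) a /\
     forall i, (1 <= i <= m)%N -> an l i = v i) -> cvg_lp z p an a.
Proof.
move=> p1 h.
have p0 : 0 < p by apply: lt_le_trans p1; rewrite ltr01.
have hb : forall m l, (exists v, pp (R:=R) v = pp (R:=R) a /\
     forall i, (1 <= i <= m)%N -> an l i = v i) ->
    (lp_dist z p (pp (R:=R) (an l)) (pp (R:=R) a) <= (((3 * w m) `^ p^-1))%:E)%E.
  move=> m l [v [hv hag]]; rewrite -hv; exact: lp_agree.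
have hge : forall l, (0 <= lp_dist z p (pp (R:=R) (an l)) (pp (R:=R) a))%E.
  move=> l; rewrite /lp_dist; exact: poweR_ge0.
apply/fine_cvgP; split.
  have [L HL] := h 0%N; exists L => // l hl.
  rewrite ge0_fin_numE //; apply: le_lt_trans (hb 0%N l (HL l hl)) _; exact: ltry.
apply/cvgrPdist_le => e e0.
have ep : 0 < e `^ p / 3 by rewrite divr_gt0 ?powR_gt0.
have [M HM] := w_small ep.
have [L HL] := h M.
near=> l; have hl : (L <= l)%N by near: l; exact: nbhs_infty_ge.
have hl' := hb M l (HL l hl).
have fin : lp_dist z p (pp (R:=R) (an l)) (pp (R:=R) a) \is a fin_num.
  by rewrite ge0_fin_numE ?hge //; apply: le_lt_trans hl' _; exact: ltry.
rewrite /= sub0r normrN ger0_norm; last by rewrite fine_ge0 ?hge.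
rewrite -lee_fin fineK //; apply: le_trans hl' _; rewrite lee_fin.
have -> : e = (e `^ p) `^ p^-1 by rewrite -powRrM mulfV ?gt_eqF ?powRr1 // ltW.
apply: ge0_ler_powR; rewrite ?nnegrE ?invr_ge0 ?ltW ?powR_gt0 //.
  by apply: mulr_gt0 => //; exact: w_gt0.
by move: (HM M (leqnn M)); rewrite ltr_pdivlMr // mulrC.
Unshelve. all: by end_near.
Qed.

End S.

Section S2.
Variable R : realType.
Local Notation w := (@w R).
Local Notation cd := (Defs.coord (R:=R)).
Local Notation Gs := (@Gs R _).
Local Notation fw := (@fw R _).

Lemma step2 A (z : A) (u v : nat -> A) k j1 j2 :
  (1 <= k)%N -> (k < j1)%N -> (j1 < j2)%N -> v j1 <> v j2 ->
  (forall i, (1 <= i < k)%N -> u i = v i) -> u k <> v k ->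
  exists c, c <> z /\ w j2.+2 <= `|cd u c - cd v c|.
Proof.
move=> k1 kj1 j12 vj huv ukv.
have kj2 : (k < j2)%N by apply: ltn_trans kj1 j12.
have wle : w j2.+2 <= w j1.+2 by apply: w_le; rewrite ltnS ltnW.
case: (pselect (u k = z)) => hz.
- case: (pselect (v j1 = z)) => h1.
  + have hj2 : v j2 <> z by move=> h; apply: vj; rewrite h1 h.
    have [c [cz hc]] := @step R A z u v k j2 k1 kj2 huv ukv
       (fun h => False_ind _ (h hz)) (fun _ => hj2).
    by exists c.
  + have [c [cz hc]] := @step R A z u v k j1 k1 kj1 huv ukv
       (fun h => False_ind _ (h hz)) (fun _ => h1).
    by exists c; split => //; apply: le_trans hc.
- case: (pselect (v j1 = u k)) => h1.
  + have hj2 : v j2 <> u k by move=> h; apply: vj; rewrite h1 h.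
    have [c [cz hc]] := @step R A z u v k j2 k1 kj2 huv ukv
       (fun _ => hj2) (fun h => False_ind _ (hz h)).
    by exists c.
  + have [c [cz hc]] := @step R A z u v k j1 k1 kj1 huv ukv
       (fun _ => h1) (fun h => False_ind _ (hz h)).
    by exists c; split => //; apply: le_trans hc.
Qed.

Lemma close_gen A (z : A) (a : nat -> A) m :
  (forall k, (1 <= k <= m)%N -> exists j1 j2, (k < j1)%N /\ (j1 < j2)%N /\ a j1 <> a j2) ->
  exists d : R, 0 < d /\ forall u : nat -> A,
    (forall c, c <> z -> `|cd u c - cd a c| < d) ->
    forall i, (1 <= i <= m)%N -> u i = a i.
Proof.
elim: m => [|m IH] hj.
  by exists 1; split => // u _ i /andP[i1 i0]; move: (leq_trans i1 i0).
have [d1 [d10 H1]] : exists d : R, 0 < d /\ forall u : nat -> A,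
    (forall c, c <> z -> `|cd u c - cd a c| < d) ->
    forall i, (1 <= i <= m)%N -> u i = a i.
  apply: IH => k /andP[k1 km]; apply: hj; rewrite k1 /=; exact: leqW.
have [j1 [j2 [kj1 [j12 aj]]]] := hj m.+1 (leqnn _).
exists (Num.min d1 (w j2.+2)); split; first by rewrite lt_min d10 w_gt0.
move=> u hu.
have hu1 : forall i, (1 <= i <= m)%N -> u i = a i.
  apply: H1 => c cz; apply: lt_le_trans (hu c cz) _; by rewrite ge_min lexx.
move=> i /andP[i1]; rewrite leq_eqVlt => /orP[/eqP->|]; last first.
  by rewrite ltnS => im; apply: hu1; rewrite i1.
apply: contrapT => ne.
have hpre : forall i, (1 <= i < m.+1)%N -> u i = a i.
  by move=> i' hi; apply: hu1; move: hi; rewrite ltnS.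
have [c [cz hc]] := @step2 A z u a m.+1 j1 j2 (ltn0Sn _) kj1 j12 aj hpre ne.
have := hu c cz; have h1 : Num.min d1 (w j2.+2) <= w j2.+2 by rewrite ge_min lexx orbT.
move=> h2.
have := lt_le_trans h2 h1; rewrite ltNge hc //.
Qed.

Lemma agree_ind A (u v : nat -> A) K m :
  (forall i, (1 <= i <= K)%N -> u i = v i) ->
  (forall k, (K < k <= m)%N -> (forall i, (1 <= i < k)%N -> u i = v i) -> u k = v k) ->
  forall i, (1 <= i <= m)%N -> u i = v i.
Proof.
move=> h1; elim: m => [|m IH] h2 i /andP[i1 im].
  by move: (leq_trans i1 im).
move: im; rewrite leq_eqVlt => /orP[/eqP->|]; last first.
  rewrite ltnS => im; apply: IH; last by rewrite i1.
  by move=> k /andP[Kk km]; by apply: h2; rewrite Kk (leqW km).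
have IH' : forall i, (1 <= i <= m)%N -> u i = v i.
  apply: IH => k /andP[Kk km]; by apply: h2; rewrite Kk (leqW km).
case: (leqP m.+1 K) => hK; first by apply: h1; rewrite hK.
apply: h2; first by rewrite hK leqnn.
by move=> i' /andP[i1' im']; apply: IH'; rewrite i1' -ltnS.
Qed.

Lemma G_tail A (u : nat -> A) c n0 N e0 e1 : (n0 < N)%N -> u n0 = e0 ->
  (forall i, (n0 < i)%N -> u i = e1) ->
  Gs u c n0 N = (if `[< e0 = c >] then w n0 else 0) +
                (if `[< e1 = c >] then w n0 - 2 * w N else 0).
Proof.
move=> nN h0 h1; rewrite /Gs big_ltn // {1}/fw h0; congr (_ + _).
have -> : \sum_(n0.+1 <= i < N) fw u c i = \sum_(n0.+1 <= i < N) (if `[< e1 = c >] then w i else 0).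
  by apply: eq_big_nat => i /andP[hi _]; rewrite /fw h1.
case: ifP => _; first by rewrite geo // -wS.
by rewrite big1.
Qed.

Definition swapseq A (a : nat -> A) n0 (x y : A) : nat -> A :=
  fun i => if (i < n0)%N then a i else if i == n0 then y else x.

Lemma pp_swap A (a : nat -> A) n0 x y : (1 <= n0)%N -> a n0 = x ->
  (forall k, (n0 < k)%N -> a k = y) -> pp (R:=R) (swapseq a n0 x y) = pp (R:=R) a.
Proof.
move=> n01 ax ay; apply: funext => c; rewrite /pp.
set v := swapseq a n0 x y.
have hb : forall N, (n0 < N)%N -> `|cd v c - cd a c| <= 4 * w N.
  move=> N nN.
  have hpre : forall i, (1 <= i < n0)%N -> v i = a i.
    by move=> i /andP[_ hi]; rewrite /v /swapseq hi.
  have /andP[D1 D2] := @Dbounds R A v a c n0 N n01 (ltnW nN) hpre.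
  rewrite (@G_tail A v c n0 N y x nN) in D1 D2; last 2 first.
  - by rewrite /v /swapseq ltnn eqxx.
  - by move=> i hi; rewrite /v /swapseq ltnNge (ltnW hi) /= gtn_eqF.
  - rewrite (@G_tail A a c n0 N x y nN ax ay) in D1 D2.
    have w0 := w_ge0 R N; rewrite ler_norml; move: D1 D2.
    by case: (asboolP (x = c)) => _; case: (asboolP (y = c)) => _ D1 D2;
      apply/andP; split; lra.
apply/eqP; rewrite -subr_eq0 -normr_eq0; apply/eqP; apply: contrapT => hne.
have hpos : 0 < `|cd v c - cd a c| / 8.
  by rewrite divr_gt0 // lt_neqAle eq_sym; apply/andP; split; [apply/eqP|].
have [M HM] := w_small hpos.
have hN : (n0 < maxn M n0.+1)%N by rewrite leq_max leqnn orbT.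
have := hb _ hN; have := HM (maxn M n0.+1) (leq_maxl _ _).
have := normr_ge0 (cd v c - cd a c); lra.
Qed.

End S2.

Unset Implicit Arguments. Set Strict Implicit.

Theorem theorem3p1 (R : realType) (A : choiceType) (z : A) (p : R)
  (hinf : infinite_set [set: A]) (hp : 1 <= p)
  (an : nat -> nat -> A) (a : nat -> A) :
  ((forall q : nat, (1 <= q)%N -> ~ (forall k : nat, (q <= k)%N -> a k = a q)) ->
     (cvg_lp z p an a <-> cvg_NA (R:=R) an a))
  /\
  (forall (n0 : nat) (x y : A), (2 <= n0)%N -> x <> y ->
     a n0 = x -> (forall k : nat, (n0 < k)%N -> a k = y) ->
     (cvg_lp z p an a <->
      (forall m : nat, (n0 + 1 < m)%N ->
         exists lm : nat, (1 <= lm)%N /\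
           forall l : nat, (lm <= l)%N ->
             ((forall i, (1 <= i <= n0 - 1)%N -> an l i = a i) /\ an l n0 = x /\
              (forall i, (n0 + 1 <= i <= m)%N -> an l i = y))
             \/
             ((forall i, (1 <= i <= n0 - 1)%N -> an l i = a i) /\ an l n0 = y /\
              (forall i, (n0 + 1 <= i <= m)%N -> an l i = x))))).
Proof.
have p0 : 0 < p by apply: lt_le_trans hp; rewrite ltr01.
split.
  move=> hnc.
  have hj : forall k, exists j1 j2, (k < j1)%N /\ (j1 < j2)%N /\ a j1 <> a j2.
    move=> k; case: (pselect (exists j, (k.+1 <= j)%N /\ a j <> a k.+1)) => [[j [hj1 hj2]]|hno].
      exists k.+1, j; split => //; split; last by apply: nesym.
      rewrite ltn_neqAle hj1 andbT; by apply/eqP => e; apply: hj2; rewrite e.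
    exfalso; apply: (hnc k.+1 (ltn0Sn k)) => j0 hj0; apply: contrapT => ne.
    by apply: hno; exists j0.
  split.
    move=> hlp; apply/NA_iff => m.
    have [d [d0 Hd]] := @close_gen R A z a m (fun k _ => hj k).
    have [L HL] := LP_lower p0 hlp d0.
    by exists L => l hl; apply: Hd => c cz; exact: HL.
  move/NA_iff => h; apply: LP_upper => // m; have [L HL] := h m.
  by exists L => l hl; exists a; split => //; exact: HL.
move=> n0 x y n02 xy ax ay.
have n01 : (1 <= n0)%N by apply: leq_trans n02.
set v := swapseq a n0 x y.
have hv := @pp_swap R A a n0 x y n01 ax ay.
have hvc : forall c, Defs.coord (R:=R) v c = Defs.coord (R:=R) a c.
  by move=> c; have := congr1 (fun f => f c) hv.
have vlt : forall i, (i < n0)%N -> v i = a i by move=> i hi; rewrite /v /swapseq hi.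
have vn0 : v n0 = y by rewrite /v /swapseq ltnn eqxx.
have vgt : forall i, (n0 < i)%N -> v i = x.
  by move=> i hi; rewrite /v /swapseq ltnNge (ltnW hi) /= gtn_eqF.
split.
- move=> hlp m hm.
  have hj : forall k, (1 <= k <= n0.-1)%N ->
      exists j1 j2, (k < j1)%N /\ (j1 < j2)%N /\ a j1 <> a j2.
    move=> k hk; exists n0, n0.+1; split; first by lia.
    by split => //; rewrite ax ay.
  have [d1 [d10 Hd1]] := @close_gen R A z a n0.-1 hj.
  set d := Num.min d1 (w R m.+3).
  have d0 : 0 < d by rewrite lt_min d10 w_gt0.
  have dw : d <= w R m.+3 by rewrite ge_min lexx orbT.
  have [L HL] := LP_lower p0 hlp d0.
  exists (maxn L 1); split; first exact: leq_maxr.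
  move=> l hl; set u := an l.
  have hlL : (L <= l)%N by apply: leq_trans hl; exact: leq_maxl.
  have cl : forall c, c <> z -> `|Defs.coord (R:=R) u c - Defs.coord (R:=R) a c| < d.
    by move=> c cz; exact: HL.
  have cl' : forall c, c <> z -> `|Defs.coord (R:=R) u c - Defs.coord (R:=R) v c| < d.
    by move=> c cz; rewrite hvc; exact: cl.
  have pre : forall i, (1 <= i <= n0 - 1)%N -> u i = a i.
    move=> i hi; apply: Hd1 => [c cz|]; last by rewrite -subn1.
    by apply: lt_le_trans (cl c cz) _; rewrite ge_min lexx.
  have stepc : forall v0 : nat -> A,
      (forall c, c <> z -> `|Defs.coord (R:=R) u c - Defs.coord (R:=R) v0 c| < d) ->
      forall k j, (1 <= k)%N -> (k < j)%N -> (j <= m.+1)%N ->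
      (forall i, (1 <= i < k)%N -> u i = v0 i) -> u k <> v0 k ->
      (u k <> z -> v0 j <> u k) -> (u k = z -> v0 j <> z) -> False.
    move=> v0 cl0 k j k1 kj jm hpre ne H1 H2.
    have [c [cz hc]] := @step R A z u v0 k j k1 kj hpre ne H1 H2.
    have := cl0 c cz; have : w R m.+3 <= w R j.+2 by apply: w_le.
    move=> h1 h2; have := lt_le_trans (lt_le_trans h2 dw) h1.
    by rewrite ltNge hc.
  have pre' : forall i, (1 <= i < n0)%N -> u i = a i.
    by move=> i hi; apply: pre; lia.
  have hn0 : u n0 = x \/ u n0 = y.
    apply: contrapT => hne.
    have jm : (n0.+1 <= m.+1)%N by lia.
    have ne : u n0 <> a n0 by rewrite ax => h; apply: hne; left.
    have H1 : u n0 <> z -> a n0.+1 <> u n0 by rewrite ay // => _ h; apply: hne; right.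
    have H2 : u n0 = z -> a n0.+1 <> z by rewrite ay // => hz h; apply: hne; right; rewrite hz h.
    exact: (stepc a cl n0 n0.+1 n01 (ltnSn _) jm pre' ne H1 H2).
  case: hn0 => hn0; [left|right]; (split; first exact: pre); split => //.
  + have ag : forall i, (1 <= i <= m)%N -> u i = a i.
      apply: (@agree_ind A u a n0).
        move=> i /andP[i1]; rewrite leq_eqVlt => /orP[/eqP->|iln0].
          by rewrite hn0 ax.
        by apply: pre'; rewrite i1 iln0.
      move=> k /andP[kn0 km] hpre; apply: contrapT => ne.
      have k1 : (1 <= k)%N by lia.
      have jm : (k.+1 <= m.+1)%N by lia.
      have kk : (n0 < k)%N by [].
      have kk1 : (n0 < k.+1)%N by lia.
      have H1 : u k <> z -> a k.+1 <> u k.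
        by rewrite (ay _ kk1) => _ h; apply: ne; rewrite (ay _ kk).
      have H2 : u k = z -> a k.+1 <> z.
        by rewrite (ay _ kk1) => hz h; apply: ne; rewrite (ay _ kk) hz h.
      exact: (stepc a cl k k.+1 k1 (ltnSn _) jm hpre ne H1 H2).
    move=> i hi; rewrite ag; [apply: ay|]; lia.
  + have ag : forall i, (1 <= i <= m)%N -> u i = v i.
      apply: (@agree_ind A u v n0).
        move=> i /andP[i1]; rewrite leq_eqVlt => /orP[/eqP->|iln0].
          by rewrite hn0 vn0.
        by rewrite vlt //; apply: pre'; rewrite i1 iln0.
      move=> k /andP[kn0 km] hpre; apply: contrapT => ne.
      have k1 : (1 <= k)%N by lia.
      have jm : (k.+1 <= m.+1)%N by lia.
      have kk : (n0 < k)%N by [].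
      have kk1 : (n0 < k.+1)%N by lia.
      have H1 : u k <> z -> v k.+1 <> u k.
        by rewrite (vgt _ kk1) => _ h; apply: ne; rewrite (vgt _ kk).
      have H2 : u k = z -> v k.+1 <> z.
        by rewrite (vgt _ kk1) => hz h; apply: ne; rewrite (vgt _ kk) hz h.
      exact: (stepc v cl' k k.+1 k1 (ltnSn _) jm hpre ne H1 H2).
    move=> i hi; rewrite ag; [apply: vgt|]; lia.
- move=> H; apply: LP_upper => // m.
  have hmm : (n0 + 1 < maxn m n0.+2)%N by rewrite leq_max addn1 leqnn orbT.
  have [lm [lm1 Hlm]] := H (maxn m n0.+2) hmm.
  exists lm => l hl; case: (Hlm l hl) => [[h1 [h2 h3]]|[h1 [h2 h3]]].
  + exists a; split => // i /andP[i1 im].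
    case: (ltngtP i n0) => hi.
    * by apply: h1; lia.
    * rewrite ay // h3 //; lia.
    * by rewrite hi h2 ax.
  + exists v; split => // i /andP[i1 im].
    case: (ltngtP i n0) => hi.
    * by rewrite vlt // h1 //; lia.
    * rewrite vgt // h3 //; lia.
    * by rewrite hi h2 vn0.
Qed.
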